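(* Let $\Sigma_1,\Sigma_2$ be subspaces of the Euclidean space $E_n$ with $1\le \dim\Sigma_1,\dim\Sigma_2\le n-1$, and let $\Sigma_1^*,\Sigma_2^*$ be their orthogonal complements. Then $\varphi(\Sigma_1,\Sigma_2)=\varphi(\Sigma_1^*,\Sigma_2^* )$.
   Context: $E_n$ is $\mathbb R^n$ with its standard inner product $(\cdot,\cdot)$. Angle between subspaces: for nonzero subspaces $S,T$ of $E_n$ with $\dim S=p\le q=\dim T$, choose orthonormal bases $\mathbf a_1,\dots,\mathbf a_p$ of $S$ and $\mathbf b_1,\dots,\mathbf b_q$ of $T$ and let $M$ be the $p\times q$ matrix $M_{ij}=(\mathbf a_i,\mathbf b_j)$. Then $0\le\det(MM^T)\le 1$, and the angle $\varphi(S,T)=\varphi(T,S)\in[0,\pi/2]$ is defined by $\cos^2\varphi(S,T)=\det(MM^T)$ (this does not depend on the choice of orthonormal bases). *)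

(* Defs.v *)
From HB Require Import structures.
From mathcomp Require Import all_boot all_order all_algebra.
From mathcomp Require Import reals trigo.
Set Implicit Arguments. Unset Strict Implicit. Unset Printing Implicit Defensive.
Import Order.TTheory GRing.Theory Num.Theory.
Local Open Scope ring_scope.

(* E_n = row vectors 'rV[R]_n with the standard inner product (u,v) = u *m v^T.
   A subspace of E_n is represented by the row space of a matrix S : 'M_n
   (mxalgebra, scope %MS); its dimension is \rank S. *)

(* Orthogonal complement: all u with (u, s) = 0 for every row s of S,
   i.e. u *m S^T = 0; this is the row space of kermx S^T. *)
Definition orthcomp (R : fieldType) (n : nat) (S : 'M[R]_n) : 'M[R]_n :=
  kermx S^T.

Definition orthonormal_basis (R : fieldType) (p n : nat)
  (A : 'M[R]_(p, n)) (S : 'M[R]_n) : bool :=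
  (A *m A^T == 1%:M) && (A == S)%MS.

(* cos^2 of the angle, computed from orthonormal bases A (of S, dim p) and
   B (of T, dim q): with M_ij = (a_i, b_j), det(M M^T) when p <= q,
   and symmetrically det(M^T M) (= det(M' M'^T) with M' = M^T) when p > q. *)
Definition cos2_angle (R : fieldType) (p q n : nat)
  (A : 'M[R]_(p, n)) (B : 'M[R]_(q, n)) : R :=
  let M := A *m B^T in
  if (p <= q)%N then \det (M *m M^T) else \det (M^T *m M).

Definition angle (R : realType) (p q n : nat)
  (A : 'M[R]_(p, n)) (B : 'M[R]_(q, n)) : R :=
  acos (Num.sqrt (cos2_angle A B)).

(* Main.v *)
Require Import Defs.
From HB Require Import structures.
From mathcomp Require Import all_boot all_order all_algebra.
From mathcomp Require Import reals trigo.
From mathcomp Require Import zify.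
Import Order.TTheory GRing.Theory Num.Theory.
Local Open Scope ring_scope.

Set Warnings "-deprecated".
Lemma sylv (R : comRingType) p q (X : 'M[R]_(p, q)) (Y : 'M[R]_(q, p)) :
  \det (1%:M + X *m Y) = \det (1%:M + Y *m X).
Proof.
pose G := block_mx 1%:M X (- Y) 1%:M.
pose H := block_mx (1%:M : 'M[R]_p) (- X) 0 (1%:M : 'M[R]_q).
have dH : \det H = 1 by rewrite det_ublock !det1 mulr1.
have e1 : H *m G = block_mx (1%:M + X *m Y) 0 (- Y) 1%:M.
  rewrite mulmx_block !mul1mx !mul0mx !add0r !mulNmx mulmxN opprK.
  by rewrite mulmx1 subrr.
have e2 : G *m H = block_mx 1%:M 0 (- Y) (1%:M + Y *m X).
  rewrite mulmx_block !mulmx1 !mul1mx !mulmx0 !addr0 mulmxN mulNmx opprK.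
  by rewrite addNr addrC.
have := congr1 determinant e1; rewrite det_mulmx dH mul1r det_lblock det1 mulr1 => <-.
have := congr1 determinant e2; rewrite det_mulmx dH mulr1 det_lblock det1 mul1r => <-.
by [].
Qed.

Lemma proj_id (R : fieldType) n p p' (S : 'M[R]_n) (A : 'M[R]_(p, n)) (A' : 'M[R]_(p', n)) :
  orthonormal_basis A S -> orthonormal_basis A' (orthcomp S) ->
  (A^T *m A + A'^T *m A' = 1%:M) /\ (p + p' = n)%N.
Proof.
rewrite /orthonormal_basis /orthcomp => /andP[/eqP hA /andP[AS SA]] /andP[/eqP hA' /andP[A'S SA']].
have rk : forall m (C : 'M[R]_(m, n)), C *m C^T = 1%:M -> \rank C = m.
  move=> m C hC; apply/eqP; rewrite eqn_leq rank_leq_row /=.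
  by rewrite -{1}(mxrank1 R m) -hC mxrankM_maxl.
have rA : \rank A = \rank S by apply: eqmx_rank; rewrite AS SA.
have rA' : \rank A' = (n - \rank S)%N.
  by rewrite -(mxrank_tr S) -mxrank_ker; apply: eqmx_rank; rewrite A'S SA'.
have pn : (p + p' = n)%N.
  rewrite -(rk _ _ hA) -(rk _ _ hA') rA rA' subnKC //.
  by rewrite -(mxrank_tr S) rank_leq_row.
split=> //.
have o : A' *m A^T = 0.
  case/submxP: A'S => D ->; case/submxP: AS => E ->.
  by rewrite trmx_mul -mulmxA (mulmxA _ S^T) mulmx_ker mul0mx mulmx0.
have o' : A *m A'^T = 0 by rewrite -(trmxK (A *m A'^T)) trmx_mul trmxK o trmx0.
pose U := col_mx A A'.
have UU : U *m U^T = 1%:M.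
  rewrite /U tr_col_mx mul_col_mx !mul_mx_row hA hA' o o'.
  by rewrite (scalar_mx_block p p').
have : row_full U.
  rewrite /row_full eqn_leq rank_leq_col /=.
  by rewrite -{1}pn -{1}(mxrank1 R (p + p')) -UU mxrankM_maxl.
case/row_fullP=> X hX.
have XU : X = U^T by rewrite -[X]mulmx1 -UU mulmxA hX mul1mx.
by rewrite -hX XU /U tr_col_mx mul_row_col.
Qed.

Arguments proj_id {R n p p' S A A'}.

Lemma gram_split (R : comRingType) m k k' n (C : 'M[R]_(m,n)) (B : 'M[R]_(k,n)) (B' : 'M[R]_(k',n)) :
  B^T *m B + B'^T *m B' = 1%:M -> C *m C^T = 1%:M ->
  (C *m B^T) *m (C *m B^T)^T + (C *m B'^T) *m (C *m B'^T)^T = 1%:M.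
Proof.
move=> hB hC.
have : C *m (B^T *m B + B'^T *m B') *m C^T = 1%:M by rewrite hB mulmx1.
by rewrite mulmxDr mulmxDl !trmx_mul !trmxK !mulmxA.
Qed.

Arguments gram_split {R m k k' n C B B'}.

Lemma detkey (R : comRingType) m k (U : 'M[R]_m) (V : 'M[R]_k) (X : 'M[R]_(m,k)) :
  U + X *m X^T = 1%:M -> V + X^T *m X = 1%:M -> \det U = \det V.
Proof.
move=> hU hV.
have -> : U = 1%:M + (- X) *m X^T by rewrite -hU mulNmx addrK.
have -> : V = 1%:M + X^T *m (- X) by rewrite -hV mulmxN addrK.
exact: sylv.
Qed.

Arguments detkey {R m k U V X}.

Theorem theorem1p3 (R : realType) (n : nat) (S1 S2 : 'M[R]_n)
  (h1 : (1 <= \rank S1 <= n.-1)%N) (h2 : (1 <= \rank S2 <= n.-1)%N)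
  (p q p' q' : nat)
  (A : 'M[R]_(p, n)) (B : 'M[R]_(q, n))
  (A' : 'M[R]_(p', n)) (B' : 'M[R]_(q', n)) :
  orthonormal_basis A S1 -> orthonormal_basis B S2 ->
  orthonormal_basis A' (orthcomp S1) -> orthonormal_basis B' (orthcomp S2) ->
  angle A B = angle A' B'.
Proof.
move=> oA oB oA' oB'.
have [PA pn] := proj_id oA oA'.
have [PB qn] := proj_id oB oB'.
move: oA oB oA' oB'; rewrite /orthonormal_basis.
move=> /andP[/eqP AA _] /andP[/eqP BB _] /andP[/eqP AA' _] /andP[/eqP BB' _].
rewrite /angle; congr (acos (Num.sqrt _)); rewrite /cos2_angle.
have e1 := gram_split PB AA.
have e2 := gram_split PA BB'.
have e3 := gram_split PA BB.
have e4 := gram_split PB AA'.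
have I1 : \det ((A *m B^T) *m (A *m B^T)^T) = \det ((A' *m B'^T)^T *m (A' *m B'^T)).
  apply: (detkey e1).
  move: e2; rewrite addrC -[B' *m A^T](trmxK (B' *m A^T)) !trmx_mul !trmxK.
  by [].
have I2 : \det ((A *m B^T)^T *m (A *m B^T)) = \det ((A' *m B'^T) *m (A' *m B'^T)^T).
  symmetry; apply: (detkey (X := A' *m B^T)).
    by rewrite addrC.
  move: e3; rewrite !trmx_mul !trmxK. move=> h; exact h.

case: (leqP p q) => hpq; case: (leqP p' q') => hpq'.
- have eq' : q' = p' by lia.
  subst q'.
  by rewrite I1 !det_mulmx !det_tr mulrC.
- exact: I1.
- exact: I2.
- exfalso; lia.
Qed.
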